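(* Let $(X,\mu)$ be a probability space and let $f\in L^1(X,\mu)$ be real-valued with $\int f\,d\mu=0$ and $\int e^{-\alpha f}\,d\mu<\infty$ for all $\alpha>0$. Then for every integer $n\geq1$, \[ \int\big(e^{-f}-1\big)^{2n}\,d\mu\leq 2^{2n-2}\int\big(e^{-2nf}-1\big)\,d\mu . \] Moreover, if additionally $f\in L^4(X,\mu)$, then \[ \Big|\int e^{\mathrm{i} f}\,d\mu-e^{-\frac12\|f\|_{L^2}^2}\Big|\leq\frac{\|f\|_{L^3}^3}{6}+\frac{\|f\|_{L^2}^4}{8}. \] *)

(* Defs.v *)
From HB Require Import structures.
From mathcomp Require Import all_boot all_order all_algebra.
From mathcomp Require Import all_classical all_reals all_analysis.
From mathcomp Require Import complex.
Set Implicit Arguments. Unset Strict Implicit. Unset Printing Implicit Defensive.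
Import Order.TTheory GRing.Theory Num.Theory.
Local Open Scope ring_scope.
Local Open Scope complex_scope.

(* Characteristic-function value  \int e^{i f} dmu  as an element of R[i],
   i.e. (\int cos f) + i (\int sin f). *)
Definition int_expi d (X : measurableType d) (R : realType)
  (mu : {measure set X -> \bar R}) (f : X -> R) : R[i] :=
  (Rintegral mu setT (fun x => cos (f x)))
    +i* (Rintegral mu setT (fun x => sin (f x))).

(* The real number ||f||_{L^p} (the Lnorm of the library, made real by fine;
   finite whenever f is in L^p). *)
Definition LpnormR d (X : measurableType d) (R : realType)
  (mu : {measure set X -> \bar R}) (p : R) (f : X -> R) : R :=
  fine (Lnorm mu p%:E (EFin \o f)).

(* Main.v *)
From HB Require Import structures.
Require Import Defs.
From mathcomp Require Import all_boot all_order all_algebra.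
From mathcomp Require Import all_classical all_reals all_analysis.
From mathcomp Require Import complex.
From mathcomp Require Import ring lra measurable_realfun.
Import Order.TTheory GRing.Theory Num.Theory.
Import numFieldNormedType.Exports.
Local Open Scope ring_scope.
Local Open Scope complex_scope.

Section HH.
Variable R : realType.

Lemma nonneg_deriv (F F' : R -> R) :
  (forall x, is_derive x (1:R) F (F' x)) -> (forall x, 0 <= x -> 0 <= F' x) ->
  F 0 = 0 -> forall x, 0 <= x -> 0 <= F x.
Proof.
move=> dF F'ge F0 x x0.
have cF : continuous (F : R -> R).
  move=> y; apply: differentiable_continuous.
  by apply/derivable1_diffP; exact: (@ex_derive _ _ _ _ _ _ _ (dF y)).
rewrite -F0; apply: (@ger0_derive1_ndecr _ F 0 x) => //.
- move=> y; rewrite in_itv /= => /andP[y0 _].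
  by rewrite derive1E (@derive_val _ _ _ _ _ _ _ (dF y)); apply: F'ge; apply: ltW.
- exact: continuous_subspaceT.
Qed.

Lemma expR_ge2 (t : R) : 0 <= t -> 1 + t + t ^+ 2 / 2 <= expR t.
Proof.
move=> t0.
have H := @nonneg_deriv (expR - cst 1 - id - (2^-1 : R) \*: (@id R) ^+ 2) (fun t => expR t - 1 - t).
rewrite -subr_ge0.
have := H _ _ _ t t0 => /=.
have -> : expR t - (1 + t + t ^+ 2 / 2) = expR t - 1 - t - 2^-1 * t ^+ 2 by ring.
apply => //.
- move=> x.
  apply: is_derive_eq.
  rewrite /= -[(2 * x ^+ 1)%:A]/(2 * x ^+ 1 * 1) -[_ *: (_ * 1)]/(2^-1 * (2 * x ^+ 1 * 1)).
  by field.
- by move=> x _; have := expR_ge1Dx x; lra.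
- by rewrite !fctE /= expR0 expr0n /= scaler0 !subr0 subrr.
Qed.

Lemma scaleRE (a b : R) : a *: b = a * b. Proof. by []. Qed.

Lemma cs_bound (c s x : R) : c ^+ 2 + s ^+ 2 <= 1 -> 0 <= x ->
  c * (cos x - 1 + x ^+ 2 / 2) + s * (sin x - x) <= x ^+ 3 / 6.
Proof.
move=> cs x0.
have h3 : forall y : R, 0 <= 1 - c * sin y + s * cos y.
  move=> y; have := cos2Dsin2 y; rewrite addrC => e.
  have : (c * sin y - s * cos y) ^+ 2 <= 1.
    have -> : (c * sin y - s * cos y) ^+ 2 = (c^+2 + s^+2) * (sin y ^+ 2 + cos y ^+ 2) - (c * cos y + s * sin y) ^+ 2 by ring.
    rewrite e mulr1; have := sqr_ge0 (c * cos y + s * sin y); lra.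
  nra.
have h2 := @nonneg_deriv (id + c \*: cos - cst c + s \*: sin) (fun y => 1 - c * sin y + s * cos y).
have h2' : forall y : R, 0 <= y -> 0 <= y + c * cos y - c + s * sin y.
  move=> y y0; apply: (h2 _ _ _ y y0).
  - move=> z; apply: is_derive_eq; rewrite /= !scaleRE; ring.
  - by move=> z _; apply: h3.
  - by rewrite !fctE /= cos0 sin0 scaleRE; ring.
have h1 := @nonneg_deriv (2^-1 \*: (@id R) ^+ 2 + c \*: sin - c \*: id - s \*: cos + cst s) (fun y => y + c * cos y - c + s * sin y).
have h1' : forall y : R, 0 <= y -> 0 <= 2^-1 * y ^+ 2 + c * sin y - c * y - s * cos y + s.
  move=> y y0; apply: (h1 _ _ _ y y0).
  - move=> z; apply: is_derive_eq; rewrite /= !scaleRE; by field.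
  - by move=> z z0; apply: h2'.
  - by rewrite !fctE /= cos0 sin0 !scaleRE; ring.
have h0 := @nonneg_deriv (6^-1 \*: (@id R) ^+ 3 - c \*: (cos - cst 1 + 2^-1 \*: (@id R) ^+ 2) - s \*: (sin - id)) (fun y => 2^-1 * y ^+ 2 + c * sin y - c * y - s * cos y + s).
have := h0 _ _ _ x x0; rewrite !fctE /= !scaleRE.
have -> : x ^+ 3 / 6 = 6^-1 * x ^+ 3 by rewrite mulrC.
have -> : x ^+ 2 / 2 = 2^-1 * x ^+ 2 by rewrite mulrC.
move=> H; rewrite -subr_ge0; apply: le_trans (H _ _ _) _.
  - move=> z; apply: is_derive_eq; rewrite /= !scaleRE; by field.
  - by move=> z z0; apply: h1'.
  - by rewrite cos0 sin0; ring.
  - by rewrite le_eqVlt; apply/orP; left; apply/eqP; ring.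
Qed.

Lemma powL1 (y : R) n : 1 <= y -> (y - 1) ^+ n.+1 <= y ^+ n.+1 - 1.
Proof.
move=> y1; elim: n => [|n IH]; first by rewrite !expr1.
have e1 : 1 <= y ^+ n.+1 by apply: exprn_ege1.
have e0 : 0 <= (y - 1) ^+ n.+1 by apply: exprn_ge0; lra.
rewrite [(y - 1) ^+ n.+2]exprS [y ^+ n.+2]exprS; nra.
Qed.

Lemma powL2 (y : R) n : 0 <= y -> y <= 1 -> (1 - y) ^+ n.+1 <= 1 - y ^+ n.+1.
Proof.
move=> y0 y1; elim: n => [|n IH]; first by rewrite !expr1.
have e1 : y ^+ n.+1 <= 1 by apply: exprn_ile1.
have e2 : 0 <= y ^+ n.+1 by apply: exprn_ge0.
have e0 : 0 <= (1 - y) ^+ n.+1 by apply: exprn_ge0; lra.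
rewrite [(1 - y) ^+ n.+2]exprS [y ^+ n.+2]exprS; nra.
Qed.

Lemma powL (y : R) n : 0 <= y -> (1 <= n)%N -> (y - 1) ^+ (2 * n) <= (y ^+ n - 1) ^+ 2.
Proof.
move=> y0; case: n => [//|n] _.
rewrite mulnC exprM.
have [y1|y1] := leP 1 y.
  have := @powL1 y n y1; have : 0 <= (y - 1) ^+ n.+1 by apply: exprn_ge0; lra.
  nra.
have -> : (y - 1) ^+ n.+1 ^+ 2 = (1 - y) ^+ n.+1 ^+ 2.
  by rewrite -!exprM mulnC !exprM !sqrrB; congr (_ ^+ _); ring.
have := @powL2 y n y0 (ltW y1); have : 0 <= (1 - y) ^+ n.+1 by apply: exprn_ge0; lra.
nra.
Qed.

Lemma part1_pt (t : R) n : (1 <= n)%N ->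
  (expR (- t) - 1) ^+ (2 * n) <= expR (- ((2 * n)%:R * t)) - 1 + (2 * n)%:R * t.
Proof.
move=> n1.
have := @powL _ n (expR_ge0 (- t)) n1.
have e1 : expR (- ((2 * n)%:R * t)) = (expR (n%:R * - t)) ^+ 2.
  rewrite -expRM_natl; congr expR; rewrite natrM; ring.
have e2 : expR (- t) ^+ n = expR (n%:R * - t) by rewrite expRM_natl.
rewrite e1 e2.
have := expR_ge1Dx (n%:R * - t).
rewrite natrM.
set y := expR (n%:R * - t).
nra.
Qed.


Lemma cs_bound_all (c s x : R) : c ^+ 2 + s ^+ 2 <= 1 ->
  c * (cos x - 1 + x ^+ 2 / 2) + s * (sin x - x) <= `|x| ^+ 3 / 6.
Proof.
move=> cs; have [x0|x0] := leP 0 x.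
  by rewrite ger0_norm //; apply: cs_bound.
rewrite ltr0_norm //.
have := @cs_bound c (- s) (- x).
rewrite cosN sinN sqrrN; move=> /(_ cs) H.
have x0' : 0 <= - x by lra.
have := H x0'.
have -> : (- x) ^+ 2 = x ^+ 2 by rewrite sqrrN.
move=> H2; apply: le_trans H2; rewrite le_eqVlt; apply/orP; left; apply/eqP; ring.
Qed.

Lemma expN_bound (S : R) : 0 <= S -> `|1 - S / 2 - expR (- (S / 2))| <= S ^+ 2 / 8.
Proof.
move=> S0; set t := S / 2.
have t0 : 0 <= t by rewrite /t; lra.
have hS : S ^+ 2 / 8 = t ^+ 2 / 2 by rewrite /t; field.
rewrite hS.
have l1 := expR_ge1Dx (- t).
have l2 := @expR_ge2 t t0.
have uv : expR t * expR (- t) = 1 by rewrite -expRD subrr expR0.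
have v0 : 0 < expR (- t) by apply: expR_gt0.
set u := expR t in l2 uv *; set v := expR (- t) in l1 uv v0 *.
have q0 : 0 < 1 + t + t ^+ 2 / 2 by have := sqr_ge0 t; lra.
have vle : v <= 1 - t + t ^+ 2 / 2.
  have h : v * (1 + t + t ^+ 2 / 2) <= 1.
    have hh : v * (1 + t + t ^+ 2 / 2) <= v * u by apply: ler_wpM2l; [exact: ltW | exact: l2].
    by rewrite [v * u]mulrC uv in hh.
  have h2 : (1 - t + t ^+ 2 / 2) * (1 + t + t ^+ 2 / 2) = 1 + t ^+ 4 / 4.
    by rewrite !exprS expr0; field.
  have h3 : 0 <= t ^+ 4 by apply: exprn_ge0.
  nra.
rewrite ler_norml; apply/andP; split; lra.
Qed.

End HH.

Lemma LpnormR_pow (R : realType) (d : measure_display) (X : measurableType d)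
  (P : probability X R) (f : X -> R) (k : nat) : (0 < k)%N ->
  LpnormR P k%:R f ^+ k = fine (\int[P]_x (`|f x| ^+ k)%:E)%E.
Proof.
move=> k0; rewrite /LpnormR -powR_mulrn; last by apply: fine_ge0; apply: Lnorm_ge0.
rewrite -fine_poweR poweR_Lnorm; last by rewrite pnatr_eq0 -lt0n.
congr fine; apply: eq_integral => x _ /=.
by rewrite powR_mulrn.
Qed.

Theorem lemma4p4 (R : realType) (d : measure_display) (X : measurableType d)
  (P : probability X R) (f : X -> R)
  (f_int : P.-integrable setT (EFin \o f))
  (f_mean0 : (\int[P]_x (f x)%:E = 0)%E)
  (f_expint : forall alpha : R, 0 < alpha ->
     (\int[P]_x (expR (- (alpha * f x)))%:E < +oo)%E) :
  (forall n : nat, (1 <= n)%N ->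
    (\int[P]_x ((expR (- f x) - 1) ^+ (2 * n))%:E
      <= (2 ^+ (2 * n - 2))%:E
         * \int[P]_x (expR (- ((2 * n)%:R * f x)) - 1)%:E)%E)
  /\
  (P.-integrable setT (fun x => (`|f x| ^+ 4)%:E) ->
    `| int_expi P f - (expR (- (LpnormR P 2 f ^+ 2 / 2)))%:C |
      <= ((LpnormR P 3 f ^+ 3 / 6 + LpnormR P 2 f ^+ 4 / 8)%:C : R[i])).
Proof.
have mf : measurable_fun setT f by apply/measurable_EFinP; exact: (measurable_int P f_int).
have ci : forall c : R, P.-integrable setT (EFin \o cst c).
  by move=> c; exact: finite_measure_integrable_cst.
split.
  move=> n n1.
  pose k : R := (2 * n)%:R.
  have k0 : 0 < k by rewrite /k ltr0n muln_gt0 n1.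
  pose g := fun x => expR (- (k * f x)).
  have mg : measurable_fun setT g.
    rewrite /g; apply: measurableT_comp; first exact: measurable_expR.
    exact: (measurable_funN (measurable_funM (measurable_cst k) mf)).
  have gi : P.-integrable setT (EFin \o g).
    apply/integrableP; split; first exact/measurable_EFinP.
    under eq_integral => x _ do rewrite /= ger0_norm ?expR_ge0//.
    exact: f_expint.
  have h1 : P.-integrable setT (fun x => (g x - 1)%:E).
    apply: eq_integrable (integrableB measurableT gi (ci 1)) => //= x _.
  have h2 : P.-integrable setT (fun x => (k * f x)%:E).
    apply: eq_integrable (integrableZl measurableT k f_int) => //= x _.
  have eqI : (\int[P]_x (g x - 1 + k * f x)%:E = \int[P]_x (g x - 1)%:E)%E.
    under eq_integral do rewrite EFinD.
    rewrite integralD //.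
    under [X in (_ + X)%E]eq_integral do rewrite EFinM.
    by rewrite integralZl // f_mean0 mule0 adde0.
  have le1 : (\int[P]_x ((expR (- f x) - 1) ^+ (2 * n))%:E <= \int[P]_x (g x - 1 + k * f x)%:E)%E.
    apply: ge0_le_integral => //.
    - move=> x _; rewrite lee_fin exprM; apply: exprn_ge0; exact: sqr_ge0.
    - apply/measurable_EFinP; apply: measurable_funX; apply: measurable_funB => //.
      apply: measurableT_comp; first exact: measurable_expR.
      exact: measurable_funN.
    - apply/measurable_EFinP; apply: measurable_funD.
        by apply: measurable_funB.
      exact: (measurable_funM (measurable_cst k) mf).
    - by move=> x _; rewrite lee_fin; apply: part1_pt.
  rewrite eqI in le1.
  apply: (le_trans le1); apply: lee_pemull.
    apply: le_trans le1; apply: integral_ge0 => x _.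
    rewrite lee_fin exprM; apply: exprn_ge0; exact: sqr_ge0.
  by rewrite lee_fin; apply: exprn_ege1; lra.
move=> f4.
have iE : forall g h : X -> R, (forall x, g x = h x) ->
    P.-integrable setT (EFin \o g) -> P.-integrable setT (EFin \o h).
  by move=> g h gh ig; apply: eq_integrable ig => //= x _; rewrite gh.
have iD : forall g h : X -> R, P.-integrable setT (EFin \o g) ->
    P.-integrable setT (EFin \o h) -> P.-integrable setT (EFin \o (fun x => g x + h x)).
  by move=> g h ig ih; apply: eq_integrable (integrableD measurableT ig ih) => //= x _.
have iB : forall g h : X -> R, P.-integrable setT (EFin \o g) ->
    P.-integrable setT (EFin \o h) -> P.-integrable setT (EFin \o (fun x => g x - h x)).
  by move=> g h ig ih; apply: eq_integrable (integrableB measurableT ig ih) => //= x _.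
have iZ : forall (k : R) (g : X -> R), P.-integrable setT (EFin \o g) ->
    P.-integrable setT (EFin \o (fun x => k * g x)).
  by move=> k g ig; apply: eq_integrable (integrableZl measurableT k ig) => //= x _.
have dom : forall g : X -> R, measurable_fun setT g ->
    (forall x, `|g x| <= 1 + `|f x| ^+ 4) ->
    P.-integrable setT (EFin \o g).
  move=> g mg hM.
  have iM : P.-integrable setT (EFin \o (fun x => 1 + `|f x| ^+ 4)).
    by apply: eq_integrable (integrableD measurableT (ci 1) f4) => //= x _.
  apply: (le_integrable measurableT _ _ iM); first exact/measurable_EFinP.
  by move=> x _ /=; rewrite lee_fin; apply: le_trans (hM x) _; exact: ler_norm.
have f4ge : forall x, 0 <= `|f x| ^+ 4 by move=> x; apply: exprn_ge0.
have icos : P.-integrable setT (EFin \o (fun x => cos (f x))).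
  apply: dom.
    by apply: measurableT_comp mf; apply: continuous_measurable_fun; exact: continuous_cos.
  by move=> x; have := cos_max (f x); have := f4ge x; lra.
have isin : P.-integrable setT (EFin \o (fun x => sin (f x))).
  apply: dom.
    by apply: measurableT_comp mf; apply: continuous_measurable_fun; exact: continuous_sin.
  by move=> x; have := sin_max (f x); have := f4ge x; lra.
have i2 : P.-integrable setT (EFin \o (fun x => f x ^+ 2)).
  apply: dom; first exact: measurable_funX.
  move=> x; rewrite normrX.
  have -> : `|f x| ^+ 4 = (`|f x| ^+ 2) ^+ 2 by rewrite -exprM.
  set b := `|f x| ^+ 2; nra.
have mabs : measurable_fun setT (fun x => `|f x|).
  by apply: measurableT_comp mf; exact: normr_measurable.
have i3 : P.-integrable setT (EFin \o (fun x => `|f x| ^+ 3)).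
  apply: dom; first exact: measurable_funX.
  move=> x; rewrite normrX normr_id.
  have a0 : 0 <= `|f x| by [].
  have [a1|a1] := leP `|f x| 1.
    have : `|f x| ^+ 3 <= 1 by apply: exprn_ile1.
    by have := f4ge x; lra.
  have -> : `|f x| ^+ 4 = `|f x| * `|f x| ^+ 3 by rewrite exprS.
  have : 0 <= `|f x| ^+ 3 by apply: exprn_ge0.
  nra.
pose A := Rintegral P setT (fun x => cos (f x)).
pose B := Rintegral P setT (fun x => sin (f x)).
pose S := Rintegral P setT (fun x => f x ^+ 2).
pose L := Rintegral P setT (fun x => `|f x| ^+ 3).
have S0 : 0 <= S by apply: Rintegral_ge0 => x _; exact: sqr_ge0.
have L0 : 0 <= L by apply: Rintegral_ge0 => x _; exact: exprn_ge0.
have hcst : Rintegral P setT (fun _ => 1) = 1.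
  rewrite Rintegral_cst // mul1r; transitivity (fine (1%:E : \bar R)) => //; congr fine; exact: probability_setT.
have hF : Rintegral P setT (fun x => f x) = 0.
  by rewrite /Rintegral f_mean0.
pose a := fun x => cos (f x) - 1 + f x ^+ 2 / 2.
pose b := fun x => sin (f x) - f x.
have ia : P.-integrable setT (EFin \o a).
  rewrite /a; apply: iD; first exact: (iB _ _ icos (ci 1)).
  by apply: (iE (fun x => 2^-1 * f x ^+ 2)) => [x|]; [rewrite mulrC | exact: iZ].
have ib : P.-integrable setT (EFin \o b) by rewrite /b; exact: (iB _ _ isin f_int).
have hal : Rintegral P setT a = A - 1 + S / 2.
  rewrite /a RintegralD //; last first.
    by apply: (iE (fun x => 2^-1 * f x ^+ 2)) => [x|]; [rewrite mulrC | exact: iZ].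
    exact: (iB _ _ icos (ci 1)).
  rewrite RintegralB //; last exact: ci.
  congr (_ - _ + _); first exact: hcst.
  by rewrite RintegralZr.
have hbe : Rintegral P setT b = B.
  by rewrite /b RintegralB // hF subr0.
set al := Rintegral P setT a in hal.
set be := Rintegral P setT b in hbe.
have key : forall c s : R, c ^+ 2 + s ^+ 2 <= 1 -> c * al + s * be <= L / 6.
  move=> c s cs.
  rewrite /al /be -(RintegralZl c measurableT ia) -(RintegralZl s measurableT ib).
  rewrite -RintegralD //; [| exact: iZ | exact: iZ].
  rewrite /L -RintegralZr //.
  apply: le_Rintegral => //.
    by apply: iD; exact: iZ.
    by apply: (iE (fun x => 6^-1 * `|f x| ^+ 3)) => [x|]; [rewrite mulrC | exact: iZ].
  by move=> x _; apply: cs_bound_all.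
have key2 : al ^+ 2 + be ^+ 2 <= (L / 6) ^+ 2.
  have [z|nz] := eqVneq (al ^+ 2 + be ^+ 2) 0.
    by rewrite z; apply: sqr_ge0.
  have q0 : 0 < al ^+ 2 + be ^+ 2.
    by rewrite lt_def nz /=; have := sqr_ge0 al; have := sqr_ge0 be; lra.
  set r := Num.sqrt (al ^+ 2 + be ^+ 2).
  have r0 : 0 < r by rewrite sqrtr_gt0.
  have rr : r ^+ 2 = al ^+ 2 + be ^+ 2 by rewrite sqr_sqrtr // ltW.
  have rn : r != 0 := lt0r_neq0 r0.
  have := key (al / r) (be / r).
  have -> : (al / r) ^+ 2 + (be / r) ^+ 2 = 1.
    have -> : (al / r) ^+ 2 + (be / r) ^+ 2 = (al ^+ 2 + be ^+ 2) / r ^+ 2 by field.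
    by rewrite -rr divff // expf_neq0.
  move=> /(_ (lexx _)).
  have -> : al / r * al + be / r * be = r.
    have -> : al / r * al + be / r * be = (al ^+ 2 + be ^+ 2) / r by field.
    by rewrite -rr expr2 mulfK.
  move=> h; rewrite -rr; have := ltW r0; nra.
have n2 : LpnormR P 2 f ^+ 2 = S.
  rewrite (@LpnormR_pow R d X P f 2 isT) /S /Rintegral; congr fine.
  by apply: eq_integral => x _; rewrite real_normK // num_real.
have n3 : LpnormR P 3 f ^+ 3 = L by rewrite (@LpnormR_pow R d X P f 3 isT).
have n4 : LpnormR P 2 f ^+ 4 = S ^+ 2 by rewrite -n2 -exprM.
rewrite n3 n4 n2 /int_expi -/A -/B normc_def lecR /=.
have eb := @expN_bound R S S0.
set E := expR (- (S / 2)) in eb *.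
rewrite subr0.
have rho0 : 0 <= L / 6 by lra.
have de0 : 0 <= S ^+ 2 / 8 by have := sqr_ge0 S; lra.
have K0 : 0 <= L / 6 + S ^+ 2 / 8 by lra.
rewrite -(ger0_norm K0) -sqrtr_sqr ler_sqrt; last exact: sqr_ge0.
have ha : `|al| <= L / 6.
  rewrite -sqrtr_sqr -(ger0_norm rho0) -sqrtr_sqr ler_sqrt; last exact: sqr_ge0.
  by have := sqr_ge0 be; lra.
set e := 1 - S / 2 - E in eb.
have h1 : al * e <= L / 6 * (S ^+ 2 / 8).
  apply: le_trans (ler_norm _) _; rewrite normrM.
  by apply: ler_pM => //.
have h2 : e ^+ 2 <= (S ^+ 2 / 8) ^+ 2.
  rewrite -(real_normK (num_real e)); have := normr_ge0 e; nra.
have -> : A - E = al + e by rewrite hal /e; ring.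
rewrite -hbe; nra.
Qed.
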